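(* For an integer $d\ge1$, let $a^+(n;d)$ (resp. $a^-(n;d)$) denote the number of partitions of $n$ whose Frobenius symbol has exactly $d$ columns and whose last parity block is positive (resp. negative). Then, as formal power series in $q$, \[ \sum_{n=1}^{\infty} a^+(n;d) q^n = \frac{q^{d^2+d}}{(q;q)_d^2 \, (1+q^d)} \qquad\text{and}\qquad \sum_{n=1}^{\infty} a^-(n;d) q^n = \frac{q^{d^2}}{(q;q)_d^2 \,(1+q^d)}. \]
   Context: Every partition $\lambda$ of $n$ is represented by its Frobenius symbol $\begin{pmatrix} x_1 & \cdots & x_d\\ y_1&\cdots & y_d\end{pmatrix}$, where $d$ is the number of cells on the main diagonal of the Ferrers diagram, $x_i$ (resp. $y_i$) is the number of cells in row $i$ to the right of (resp. in column $i$ below) the diagonal, so $x_1>\cdots>x_d\ge 0$, $y_1>\cdots>y_d\ge0$ and $\sum_{i=1}^d(x_i+y_i+1)=n$; $d$ is called the number of columns. Column $i$ is positive if $x_i-y_i\ge 1$ and negative if $x_i-y_i\le 0$. The parity blocks of $\lambda$ are the maximal sets of contiguous columns all having the same sign; a block is positive (resp. negative) if its columns are positive (resp. negative). Notation: $(a;q)_n=(1-a)(1-aq)\cdots(1-aq^{n-1})$. *)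

(* Defs.v *)
From mathcomp Require Import all_boot all_order all_algebra.
Set Implicit Arguments. Unset Strict Implicit. Unset Printing Implicit Defensive.
Import GRing.Theory.

(* A partition of n is encoded as its sequence of parts in nonincreasing
   order, padded with zeros to length n (every part is <= n, and there are at
   most n nonzero parts). *)
Definition partn (n : nat) :=
  {t : n.-tuple 'I_n.+1 |
     sorted geq (map val t) && (\sum_(i <- t) val i == n)%N}.

Section Frob.
Variable n : nat.
Implicit Type l : partn n.

Definition parts l : seq nat := map val (val (sval l)).
(* lambda_{i+1} (0-indexed) *)
Definition lam l (i : nat) : nat := nth 0 (parts l) i.
(* conjugate: lambda'_{j+1} = number of parts >= j+1 *)
Definition conjp l (j : nat) : nat := count (fun p => j < p) (parts l).
(* number of columns d of the Frobenius symbol = number of cells on the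
   main diagonal (side of the Durfee square) *)
Definition ncols l : nat := count (fun i => i < lam l i) (iota 0 n).
(* Frobenius entries, 0-indexed: x i = x_{i+1}, y i = y_{i+1} *)
Definition frx l (i : nat) : nat := lam l i - i.+1.
Definition fry l (i : nat) : nat := conjp l i - i.+1.
Definition colpos l (i : nat) : bool := fry l i < frx l i.
Definition colneg l (i : nat) : bool := frx l i <= fry l i.
(* The last parity block: the maximal set of contiguous columns ending at the
   last column d, all having the same sign as column d. *)
Definition last_block l : seq nat :=
  [seq j <- iota 0 (ncols l) |
     all (fun k => colpos l k == colpos l (ncols l).-1)
         (iota j (ncols l - j))].
Definition last_block_pos l : bool :=
  (last_block l != [::]) && all (colpos l) (last_block l).
Definition last_block_neg l : bool :=
  (last_block l != [::]) && all (colneg l) (last_block l).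
End Frob.

Definition apos (n d : nat) : nat :=
  #|[pred l : partn n | (ncols l == d) && last_block_pos l]|.
Definition aneg (n d : nat) : nat :=
  #|[pred l : partn n | (ncols l == d) && last_block_neg l]|.

Local Open Scope ring_scope.
Definition qpoch (d : nat) : {poly int} := \prod_(i < d) (1 - 'X^(i.+1)).
Definition gen_trunc (a : nat -> nat) (N : nat) : {poly int} :=
  \sum_(1 <= k < N) (a k)%:R *: 'X^k.

(* Main.v *)
Require Import Defs.
From mathcomp Require Import all_boot all_order all_algebra.
From mathcomp Require Import zify ring lra.
Import Defs.
Set Implicit Arguments. Unset Strict Implicit. Unset Printing Implicit Defensive.
Import GRing.Theory.

(* Proof outline: partitions with Durfee square d are in
   bijection with data (delta, eps, s, c) in a finite box; the generating
   function of the box factors as a product of geometric series. *)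

Lemma mem_le_sumn (s : seq nat) x : x \in s -> x <= sumn s.
Proof.
elim: s => //= y s IH; rewrite in_cons => /orP [/eqP -> | /IH]; lia.
Qed.

Lemma nth_geq_mono (s : seq nat) i j : sorted geq s -> i <= j -> nth 0 s j <= nth 0 s i.
Proof.
move=> ss ij.
case: (ltnP j (size s)) => hj; last by rewrite nth_default.
have hi : i < size s by lia.
have := @sorted_leq_nth _ geq _ _ 0 s ss i j; apply => //.
  by move=> a b c /= h1 h2; exact: leq_trans h2 h1.
  by move=> a /=.
Qed.

Lemma count_iota_all (P : pred nat) a m :
  (forall j, a <= j < a + m -> P j) -> count P (iota a m) = m.
Proof.
move=> h; rewrite -[RHS](size_iota a m) -count_predT.
apply: eq_in_count => j; rewrite mem_iota => /h ->; done.
Qed.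

Lemma count_iota_none (P : pred nat) a m :
  (forall j, a <= j < a + m -> ~~ P j) -> count P (iota a m) = 0.
Proof.
move=> h; rewrite -(count_pred0 (iota a m)).
apply: eq_in_count => j; rewrite mem_iota => /h /negbTE ->; done.
Qed.

Lemma count_prefix (P : pred nat) n d : (forall i, P i.+1 -> P i) ->
  count P (iota 0 n) = d -> d <= n /\ forall i, i < n -> P i = (i < d).
Proof.
move=> down hc.
have dn : d <= n by rewrite -hc -{2}(size_iota 0 n) count_size.
have downm : forall m j, P (j + m) -> P j.
  by elim=> [|m IH] j; rewrite ?addn0 // addnS => /down /IH.
split => // i ilt.
have split_i : forall m, m <= n -> count P (iota 0 n) = count P (iota 0 m) + count P (iota m (n - m)).
  by move=> m hm; rewrite -count_cat -iotaD /= subnKC.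
case hP: (P i).
- have := split_i i.+1 ilt; rewrite hc (@count_iota_all P 0 i.+1); first lia.
  move=> j /andP [_ hj]; apply: (downm (i - j)); rewrite subnKC //; lia.
- have := split_i i (ltnW ilt); rewrite hc (@count_iota_none P i (n - i)).
  + have := count_size P (iota 0 i); rewrite size_iota; lia.
  + move=> j /andP [hj _]; apply/negP => Pj; have := downm (j - i) i; rewrite subnKC // hP; by move/(_ Pj).
Qed.

Lemma count_prefix_inv (P : pred nat) n d : d <= n ->
  (forall i, i < n -> P i = (i < d)) -> count P (iota 0 n) = d.
Proof.
move=> dn h.
rewrite -(subnKC dn) iotaD count_cat (@count_iota_all P 0 d) ?(@count_iota_none P (0 + d)).
- by rewrite addn0.
- move=> j hj; rewrite h; lia.
- move=> j hj; rewrite h; lia.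
Qed.

Lemma sorted_cat_geq (s1 s2 : seq nat) : sorted geq s1 -> sorted geq s2 ->
  (forall x y, x \in s1 -> y \in s2 -> y <= x) -> sorted geq (s1 ++ s2).
Proof.
case: s1 => [|x s1] //= h1 h2 h.
rewrite cat_path h1 /=.
have lm : last x s1 \in x :: s1 by exact: mem_last.
case: s2 h2 h => [|y s2] //= h2 h.
rewrite h2 andbT; apply: h => //; exact: mem_head.
Qed.

Definition blocks (m : nat -> nat) D := flatten [seq nseq (m v) v | v <- iota 0 D].

Lemma blocksS m D : blocks m D.+1 = blocks m D ++ nseq (m D) D.
Proof. by rewrite /blocks -addn1 iotaD map_cat flatten_cat /= cats0. Qed.

Lemma count_blocks u m D : count_mem u (blocks m D) = if u < D then m u else 0.
Proof.
elim: D => [|D IH]; first by [].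
rewrite blocksS count_cat IH count_nseq /= ltnS.
case: (ltngtP u D) => [h|h|->]; rewrite ?eqxx /=.
- move=> *; lia.
- move=> *; lia.
- lia.
Qed.

Lemma sumn_blocks m D : sumn (blocks m D) = \sum_(v < D) v * m v.
Proof.
elim: D => [|D IH]; first by rewrite big_ord0.
by rewrite blocksS sumn_cat IH sumn_nseq big_ord_recr.
Qed.

Lemma size_blocks m D : size (blocks m D) = \sum_(v < D) m v.
Proof.
elim: D => [|D IH]; first by rewrite big_ord0.
by rewrite blocksS size_cat IH size_nseq big_ord_recr.
Qed.

Lemma mem_blocks x m D : x \in blocks m D -> x < D.
Proof.
elim: D => [|D IH] //; rewrite blocksS mem_cat => /orP [/IH|]; first lia.
by move/nseqP => [-> _].
Qed.

Lemma sum_delta (phi : nat -> nat) (x D : nat) :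
  \sum_(v < D) phi v * (x == v) = if x < D then phi x else 0.
Proof.
elim: D => [|D IH]; first by rewrite big_ord0.
rewrite big_ord_recr /= IH ltnS.
case: (ltngtP x D) => [h|h|->]; rewrite ?eqxx /=.
- move=> *; lia.
- move=> *; lia.
- lia.
Qed.

Lemma sum_counts (s : seq nat) D (phi : nat -> nat) : all (fun x => x < D) s ->
  \sum_(v < D) phi v * count_mem (v : nat) s = sumn (map phi s).
Proof.
elim: s => [|x s IH] /=.
- by rewrite big1 // => v _; rewrite muln0.
- move=> /andP [hx hs]; rewrite -IH //.
  under eq_bigr => v _ do rewrite mulnDr.
  by rewrite big_split /= sum_delta hx.
Qed.

Lemma tele_sum (F : nat -> nat) K :
  \sum_(i < K.+1) \sum_(i <= t < K) F t = \sum_(t < K) t.+1 * F t.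
Proof.
elim: K => [|K IH]; first by rewrite big_ord1 big_geq // big_ord0.
rewrite big_ord_recr /= big_geq // addn0.
rewrite (eq_bigr (fun i : 'I_K.+1 => \sum_(i <= t < K) F t + F K)); last first.
  move=> i _; rewrite big_nat_recr //=; exact: ltnSE (ltn_ord i).
by rewrite big_split /= IH sum_nat_const card_ord big_ord_recr /= mulnC.
Qed.

Lemma tele_val (g : nat -> nat) K i : (forall t, g t.+1 <= g t) -> i <= K ->
  g i = g K + \sum_(i <= t < K) (g t - g t.+1).
Proof.
move=> mono; elim: K => [|K IH] hi.
- have -> : i = 0 by lia.
  by rewrite big_geq // addn0.
- case: (ltngtP i K.+1) => [h|h|->]; last by rewrite big_geq // addn0.
  + rewrite big_nat_recr //= IH //; have := mono K; lia.
  + lia.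
Qed.

Lemma tele_step (F : nat -> nat) i K : i < K ->
  \sum_(i <= t < K) F t = F i + \sum_(i.+1 <= t < K) F t.
Proof. by move=> h; rewrite big_ltn. Qed.

Definition fn k N (f : {ffun 'I_k -> 'I_N}) (j : nat) : nat :=
  match (insub j : option 'I_k) with Some i => nat_of_ord (f i) | None => 0 end.

Lemma fnE k N (f : {ffun 'I_k -> 'I_N}) (i : 'I_k) : fn f i = f i.
Proof. by rewrite /fn valK. Qed.

Section Parts.
Variable n : nat.
Implicit Type l : partn n.

Lemma partsP l : [/\ size (parts l) = n, sorted geq (parts l) & sumn (parts l) = n].
Proof.
case: l => t p; case/andP: (p) => hs /eqP hsum; rewrite /parts /=; split => //.
- by rewrite size_map size_tuple.
- by rewrite sumnE big_map.
Qed.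

Lemma lam_mono l i j : i <= j -> lam l j <= lam l i.
Proof. by move=> h; apply: nth_geq_mono => //; case: (partsP l). Qed.

Lemma lam_le_n l i : lam l i <= n.
Proof.
case: (partsP l) => hs _ hsum; rewrite /lam.
case: (ltnP i (size (parts l))) => h; last by rewrite nth_default.
by rewrite -{2}hsum; apply: mem_le_sumn; apply: mem_nth.
Qed.

Variable k : nat.
Local Notation d := k.+1.

Lemma durfee l : ncols l = d -> d <= n /\ (forall i, i < n -> (i < lam l i) = (i < d)).
Proof.
move=> h; apply: count_prefix h => i hi.
have := lam_mono l (leqnSn i); lia.
Qed.

Lemma durfee_lo l i : ncols l = d -> i < d -> d <= lam l i.
Proof.
move=> /durfee [dn h] hi.
have := h k; rewrite ltnSn => /(_ dn) hk.
have := lam_mono l (_ : i <= k); lia.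
Qed.

Lemma durfee_hi l i : ncols l = d -> d <= i -> lam l i <= d.
Proof.
move=> /durfee [dn h] hi.
case: (ltnP d n) => hdn.
- have := h d hdn; rewrite ltnn => hd.
  have := lam_mono l hi; lia.
- rewrite /lam nth_default //; case: (partsP l) => -> _ _; lia.
Qed.

Lemma durfee_drop l x : ncols l = d -> x \in drop d (parts l) -> x <= d.
Proof.
move=> hc /(nthP 0) [j hj <-]; rewrite nth_drop.
by apply: durfee_hi hc _; exact: leq_addr.
Qed.

Lemma take_lam l : d <= n -> take d (parts l) = [seq lam l i | i <- iota 0 d].
Proof.
move=> dn; case: (partsP l) => hs _ _.
have hsz : size (take d (parts l)) = d by rewrite size_takel ?hs.
apply: (eq_from_nth (x0 := 0)); first by rewrite hsz size_map size_iota.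
move=> i; rewrite hsz => hi.
by rewrite nth_take // (nth_map 0) ?size_iota // nth_iota.
Qed.

Lemma colposE l : ncols l = d ->
  colpos l k = (count_mem d (drop d (parts l)) < lam l k - d).
Proof.
move=> hc; have [dn _] := durfee hc.
rewrite /colpos /frx /fry; congr (_ < _).
rewrite /conjp -(cat_take_drop d (parts l)) count_cat.
have -> : count (fun p => k < p) (take d (parts l)) = d.
  rewrite take_lam // count_map (@count_iota_all _ 0 d) // => j hj /=.
  have := durfee_lo (i := j) hc; lia.
rewrite addKn cat_take_drop; apply: eq_in_count => x /(durfee_drop hc) hx /=; lia.
Qed.

End Parts.

Lemma sumn_map_iota (g : nat -> nat) m : sumn (map g (iota 0 m)) = \sum_(i < m) g i.
Proof.
elim: m => [|m IH]; first by rewrite big_ord0.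
have -> : iota 0 m.+1 = iota 0 m ++ [:: m] by rewrite -addn1 iotaD.
by rewrite map_cat sumn_cat IH big_ord_recr /= addn0.
Qed.

Lemma fnlt k N (f : {ffun 'I_k -> 'I_N}) t (ht : t < k) : fn f t = f (Ordinal ht).
Proof. by rewrite /fn insubT. Qed.

Lemma fnge k N (f : {ffun 'I_k -> 'I_N}) t : k <= t -> fn f t = 0.
Proof. by move=> h; rewrite /fn insubF // ltnNge h. Qed.

Lemma geq_sorted_eq (s1 s2 : seq nat) : sorted geq s1 -> sorted geq s2 ->
  (forall u, count_mem u s1 = count_mem u s2) -> s1 = s2.
Proof.
move=> h1 h2 hc.
have htr : transitive geq by move=> a b c /= h h'; exact: leq_trans h' h.
have has : antisymmetric geq by move=> a b /andP [h h']; move: h h' => /= h h'; lia.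
apply: (sorted_eq htr has h1 h2).
by apply/allP => u _; apply/eqP; apply: hc.
Qed.

Lemma count_sort u (s : seq nat) : count_mem u (sort geq s) = count_mem u s.
Proof.
have h : perm_eq (sort geq s) s by rewrite perm_sort perm_refl.
by move/permP: h => /(_ (pred1 u)).
Qed.

Lemma sorted_sort_geq (s : seq nat) : sorted geq (sort geq s).
Proof. by apply: sort_sorted => a b; exact: leq_total. Qed.

Lemma card_by_bij (A B : finType) (PA : pred A) (PB : pred B) (f : A -> B) (g : B -> option A) :
  (forall a, PA a -> PB (f a) /\ g (f a) = Some a) ->
  (forall b, PB b -> exists a, [/\ g b = Some a, PA a & f a = b]) ->
  #|PA| = #|PB|.
Proof.
move=> h1 h2.
have inj : {in PA &, injective f}.
  move=> a1 a2 ha1 ha2 e; have [_ g1] := h1 a1 ha1; have [_ g2] := h1 a2 ha2.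
  by move: g1; rewrite e g2 => [[]].
rewrite -(card_in_imset inj); apply: eq_card => b; apply/imsetP/idP.
- by case=> a ha ->; case: (h1 a ha).
- by move=> hb; case: (h2 b hb) => a [_ ha <-]; exists a.
Qed.

Section Bij.
Variables (k M n : nat) (pos : bool).
Local Notation d := k.+1.
Local Notation N := M.+1.
Definition TT := (({ffun 'I_k -> 'I_N} * {ffun 'I_k -> 'I_N}) * ('I_N * 'I_N))%type.
Implicit Type x : TT.
Definition aa x : nat := if pos then (x.2.1 : nat) + 1 + x.2.2 else x.2.1.
Definition bb x : nat := if pos then (x.2.1 : nat) else (x.2.1 : nat) + x.2.2.
Definition rr x i := d + aa x + \sum_(i <= t < k) fn x.1.1 t.
Definition mm x v := if v == d then bb x else fn x.1.2 v.-1.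
Definition m0 x v := if v == 0 then n - d - \sum_(v < d) mm x v.+1 else mm x v.
Definition wt x := d * d + \sum_(i < k) i.+1 * x.1.1 i + \sum_(i < k) i.+1 * x.1.2 i
   + d * (aa x + bb x).
Definition Lx x := [seq rr x i | i <- iota 0 d] ++ sort geq (blocks (m0 x) d.+1).
Definition tup (s : seq nat) : n.-tuple 'I_n.+1 := [tuple inord (nth 0 s i) | i < n].
Definition gg x : option (partn n) := insub (tup (Lx x)).
Definition ff (l : partn n) : TT :=
  let A := lam l k - d in
  let B := count_mem d (drop d (parts l)) in
  (([ffun i : 'I_k => inord (lam l i - lam l i.+1)],
    [ffun i : 'I_k => inord (count_mem i.+1 (drop d (parts l)))]),
   (inord (if pos then B else A), inord (if pos then A - B.+1 else B - A))).

Hypothesis hnM : n <= M.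

Section Dir1.
Variable l : partn n.
Hypothesis hc : ncols l = d.
Hypothesis hp : colpos l k = pos.

Lemma cnt_le u : count_mem u (drop d (parts l)) <= n.
Proof.
apply: leq_trans (count_size _ _) _; rewrite size_drop; case: (partsP l) => -> _ _; lia.
Qed.

Lemma ff11 (i : 'I_k) : ((ff l).1.1 i : nat) = lam l i - lam l i.+1.
Proof. rewrite /ff ffunE inordK //; have := lam_le_n l i; lia. Qed.

Lemma ff12 (i : 'I_k) : ((ff l).1.2 i : nat) = count_mem i.+1 (drop d (parts l)).
Proof. rewrite /ff ffunE inordK //; have := cnt_le i.+1; lia. Qed.

Lemma ffab : aa (ff l) = lam l k - d /\ bb (ff l) = count_mem d (drop d (parts l)).
Proof.
have hBA := colposE hc; rewrite hp in hBA.
have hA := lam_le_n l k; have hB := cnt_le d.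
rewrite /aa /bb /ff /=; set B := count_mem _ _ in hB hBA *; set A := lam l k in hA hBA *; case: pos hBA => hBA; rewrite !inordK; lia.
Qed.

Lemma all_drop : all (fun y : nat => y < d.+1) (drop d (parts l)).
Proof. by apply/allP => y /(durfee_drop hc); rewrite ltnS. Qed.

Lemma sumn_drop : sumn (drop d (parts l)) =
  \sum_(i < k) i.+1 * count_mem i.+1 (drop d (parts l)) + d * count_mem d (drop d (parts l)).
Proof.
rewrite -{1}(map_id (drop d (parts l))) -(sum_counts id all_drop).
by rewrite big_ord_recl /= mul0n add0n big_ord_recr.
Qed.

Lemma sumn_take : sumn (take d (parts l)) =
  d * lam l k + \sum_(t < k) t.+1 * (lam l t - lam l t.+1).
Proof.
have [dn _] := durfee hc.
rewrite take_lam // sumn_map_iota -(tele_sum (fun t => lam l t - lam l t.+1)) -[X in X * lam l k](card_ord d) -sum_nat_const -big_split /=.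
apply: eq_bigr => i _; apply: tele_val; last by have := ltn_ord i; lia.
by move=> t; apply: lam_mono.
Qed.

Lemma wt_ff : wt (ff l) = n.
Proof.
case: (partsP l) => _ _ hsum.
have [ha hb] := ffab.
rewrite /wt ha hb.
have -> : \sum_(i < k) i.+1 * (ff l).1.1 i = \sum_(i < k) i.+1 * (lam l i - lam l i.+1).
  by apply: eq_bigr => i _; rewrite ff11.
have -> : \sum_(i < k) i.+1 * (ff l).1.2 i = \sum_(i < k) i.+1 * count_mem i.+1 (drop d (parts l)).
  by apply: eq_bigr => i _; rewrite ff12.
rewrite -[RHS]hsum -[in RHS](cat_take_drop d (parts l)) sumn_cat sumn_take sumn_drop.
have := durfee_lo (i := k) hc (ltnSn k).
set X := lam l k; set S1 := \sum_(i < k) _; set S2 := \sum_(i < k) _; set C := count_mem _ _.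
move=> hX; have hdX : d * d <= d * X by rewrite leq_mul2l hX orbT.
rewrite mulnDr mulnBr; lia.
Qed.

Lemma size_drop_l : size (drop d (parts l)) = n - d.
Proof. by rewrite size_drop; case: (partsP l) => -> _ _. Qed.

Lemma mm_ff v : 0 < v <= d -> mm (ff l) v = count_mem v (drop d (parts l)).
Proof.
move=> /andP [h1 h2]; rewrite /mm; case: eqP => [->|hv]; first by case: ffab.
have hv' : v.-1 < k by lia.
by rewrite (fnlt _ hv') ff12 /= prednK.
Qed.

Lemma m0_ff u : u <= d -> m0 (ff l) u = count_mem u (drop d (parts l)).
Proof.
move=> hu; rewrite /m0; case: eqP => [->|hu0]; last by apply: mm_ff; lia.
have -> : \sum_(v < d) mm (ff l) v.+1 = \sum_(v < d) count_mem v.+1 (drop d (parts l)).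
  by apply: eq_bigr => v _; apply: mm_ff; have := ltn_ord v; lia.
have := sum_counts (fun _ => 1) all_drop.
rewrite big_ord_recl /= -size_drop_l.
under eq_bigr do rewrite mul1n.
rewrite mul1n; set S := \sum_(i < d) _; set C := count_mem 0 _.
have -> : sumn [seq 1 | _ <- drop d (parts l)] = size (drop d (parts l)).
  by elim: (drop d (parts l)) => //= a s ->.
lia.
Qed.

Lemma rr_ff i : i <= k -> rr (ff l) i = lam l i.
Proof.
move=> hi; rewrite /rr; case: ffab => -> _.
rewrite (tele_val (g := lam l) (K := k) _ hi); last by move=> t; apply: lam_mono.
have -> : \sum_(i <= t < k) fn (ff l).1.1 t = \sum_(i <= t < k) (lam l t - lam l t.+1).
  apply: eq_big_nat => t /andP [_ ht]; by rewrite (fnlt _ ht) ff11.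
have := durfee_lo (i := k) hc (ltnSn k); lia.
Qed.

Lemma Lx_ff : Lx (ff l) = parts l.
Proof.
have [dn _] := durfee hc.
rewrite /Lx -[RHS](cat_take_drop d) take_lam //; congr (_ ++ _).
- by apply/eq_in_map => i; rewrite mem_iota => /andP [_ hi]; apply: rr_ff; lia.
- apply: geq_sorted_eq; first exact: sorted_sort_geq.
  + by apply: drop_sorted; case: (partsP l).
  + move=> u; rewrite count_sort count_blocks; case: ltnP => hu.
    * by apply: m0_ff; lia.
    * apply/esym/count_memPn/negP => /(durfee_drop hc); lia.
Qed.

Lemma tup_parts : tup (parts l) = sval l.
Proof.
apply: eq_from_tnth => i; rewrite tnth_mktuple.
case: (partsP l) => hs _ _.
rewrite /parts (nth_map ord0); last by rewrite size_tuple.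
by rewrite -tnth_nth inord_val.
Qed.

Lemma gg_ff : gg (ff l) = Some l.
Proof. by rewrite /gg Lx_ff tup_parts; exact: valK. Qed.

End Dir1.
Section Dir2.
Variable x : TT.
Hypothesis hw : wt x = n.

Lemma rr_mono i : rr x i.+1 <= rr x i.
Proof.
rewrite /rr leq_add2l; case: (ltnP i k) => h.
- by rewrite (tele_step _ h) leq_addl.
- by rewrite !big_geq //; lia.
Qed.

Lemma rr_ge i : d <= rr x i.
Proof. by rewrite /rr -addnA leq_addr. Qed.

Lemma sum_x1 : \sum_(i < k) i.+1 * x.1.1 i = \sum_(t < k) t.+1 * fn x.1.1 t.
Proof. by apply: eq_bigr => i _; rewrite fnE. Qed.

Lemma sum_rows : sumn (map (rr x) (iota 0 d)) = d * (d + aa x) + \sum_(t < k) t.+1 * fn x.1.1 t.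
Proof.
rewrite sumn_map_iota /rr big_split /= sum_nat_const card_ord tele_sum.
done.
Qed.

Lemma TW_eq : \sum_(v < d) v.+1 * mm x v.+1 = \sum_(i < k) i.+1 * x.1.2 i + d * bb x.
Proof.
rewrite big_ord_recr /= /mm eqxx; congr (_ + _).
apply: eq_bigr => i _; rewrite ifN; last by rewrite eqSS neq_ltn ltn_ord.
by rewrite /= fnE.
Qed.

Lemma S_le_TW : \sum_(v < d) mm x v.+1 <= \sum_(v < d) v.+1 * mm x v.+1.
Proof. by apply: leq_sum => v _; rewrite mulSn leq_addr. Qed.

Lemma dS_le_n : d + \sum_(v < d) mm x v.+1 <= n.
Proof.
have := S_le_TW; rewrite TW_eq -hw /wt sum_x1.
set S := \sum_(v < d) _; set A := \sum_(t < k) _; set B := \sum_(i < k) _.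
have : d <= d * d by rewrite leq_pmulr.
lia.
Qed.

Lemma sumn_blk : sumn (blocks (m0 x) d.+1) = \sum_(i < k) i.+1 * x.1.2 i + d * bb x.
Proof.
rewrite sumn_blocks big_ord_recl /= mul0n add0n -TW_eq.
by apply: eq_bigr => v _; rewrite /m0 /=.
Qed.

Lemma size_blk : size (blocks (m0 x) d.+1) = n - d.
Proof.
rewrite size_blocks big_ord_recl /=.
have -> : \sum_(i < d) m0 x (lift ord0 i) = \sum_(v < d) mm x v.+1 by apply: eq_bigr.
have := dS_le_n; rewrite /m0 /=; set S := \sum_(v < d) _; lia.
Qed.

Lemma size_Lx : size (Lx x) = n.
Proof.
rewrite /Lx size_cat size_map size_iota size_sort size_blk.
have := dS_le_n; lia.
Qed.

Lemma sumn_Lx : sumn (Lx x) = n.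
Proof.
rewrite /Lx sumn_cat sum_rows (perm_sumn (_ : perm_eq (sort geq _) (blocks (m0 x) d.+1))); last first.
  by rewrite perm_sort perm_refl.
rewrite sumn_blk -hw /wt sum_x1 mulnDr; lia.
Qed.

Lemma mem_blk y : y \in sort geq (blocks (m0 x) d.+1) -> y <= d.
Proof. by rewrite mem_sort => /mem_blocks; rewrite ltnS. Qed.

Lemma sorted_Lx : sorted geq (Lx x).
Proof.
apply: sorted_cat_geq; last 1 first.
- move=> a b /mapP [i _ ->] /mem_blk hb; have := rr_ge i; lia.
- have : forall a m, sorted geq [seq rr x i | i <- iota a m].
    move=> a m; elim: m a => [|m IH] a //=.
    case: m IH => [|m] IH //=; rewrite rr_mono /=; exact: (IH a.+1).
  by apply.
- exact: sorted_sort_geq.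
Qed.

Lemma Lx_le y : y \in Lx x -> y <= n.
Proof. by move=> h; rewrite -sumn_Lx; apply: mem_le_sumn. Qed.

Lemma map_tup : map val (tup (Lx x)) = Lx x.
Proof.
apply: (eq_from_nth (x0 := 0)); first by rewrite size_map size_tuple size_Lx.
move=> i; rewrite size_map size_tuple => hi.
rewrite (nth_map ord0) ?size_tuple // -(tnth_nth _ _ (Ordinal hi)) tnth_mktuple /=.
rewrite inordK // ltnS; apply: Lx_le; apply: mem_nth; rewrite size_Lx //.
Qed.

Lemma tupP : sorted geq (map val (tup (Lx x))) && (\sum_(i <- tup (Lx x)) val i == n).
Proof.
rewrite map_tup sorted_Lx /=; apply/eqP.
have e : sumn (map val (tup (Lx x))) = \sum_(i <- tup (Lx x)) val i by rewrite sumnE big_map.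
by rewrite -e map_tup sumn_Lx.
Qed.

Definition lx : partn n := exist _ (tup (Lx x)) tupP.

Lemma gg_x : gg x = Some lx.
Proof. by rewrite /gg (@insubT _ _ (partn n) _ tupP). Qed.

Lemma parts_lx : parts lx = Lx x.
Proof. exact: map_tup. Qed.

Lemma lam_lx_lo i : i < d -> lam lx i = rr x i.
Proof.
move=> hi; rewrite /lam parts_lx /Lx nth_cat size_map size_iota hi.
by rewrite (nth_map 0) ?size_iota // nth_iota.
Qed.

Lemma lam_lx_hi i : d <= i -> lam lx i <= d.
Proof.
move=> hi; rewrite /lam parts_lx /Lx nth_cat size_map size_iota ltnNge hi /=.
case: (ltnP (i - d) (size (sort geq (blocks (m0 x) d.+1)))) => h.
- by apply: mem_blk; apply: mem_nth.
- by rewrite nth_default.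
Qed.

Lemma ncols_lx : ncols lx = d.
Proof.
apply: count_prefix_inv; first by have := dS_le_n; lia.
move=> i hi; case: (ltnP i d) => h.
- by rewrite lam_lx_lo //; have := rr_ge i; lia.
- by have := lam_lx_hi h; lia.
Qed.

Lemma drop_lx : drop d (parts lx) = sort geq (blocks (m0 x) d.+1).
Proof. by rewrite parts_lx /Lx drop_size_cat // size_map size_iota. Qed.

Lemma cnt_lx u : count_mem u (drop d (parts lx)) = if u < d.+1 then m0 x u else 0.
Proof. by rewrite drop_lx count_sort count_blocks. Qed.

Lemma rr_k : rr x k = d + aa x.
Proof. by rewrite /rr big_geq // addn0. Qed.

Lemma colpos_lx : colpos lx k = pos.
Proof.
rewrite (colposE ncols_lx) cnt_lx ltnSn lam_lx_lo // rr_k /m0 /= /mm eqxx.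
rewrite /aa /bb; case: pos; lia.
Qed.

Lemma ff_lx : ff lx = x.
Proof.
have ex : x = ((x.1.1, x.1.2), (x.2.1, x.2.2)) by case: (x) => [[? ?] [? ?]].
rewrite [RHS]ex /ff; congr (_, _); [congr (_, _) | congr (_, _)].
- apply/ffunP => i; rewrite ffunE; apply: ord_inj.
  have hi1 : (i : nat) < d by apply: leqW.
  have hi2 : (i.+1 : nat) < d by rewrite ltnS.
  rewrite (lam_lx_lo hi1) (lam_lx_lo hi2).
  rewrite /rr (tele_step _ (ltn_ord i)) fnE.
  set S := \sum_(_ <= _ < _) _; rewrite inordK; last by have := ltn_ord (x.1.1 i); lia.
  move: (nat_of_ord (x.1.1 i)) => e; lia.
- apply/ffunP => i; rewrite ffunE; apply: ord_inj.
  have hi : i.+1 < d.+1 by rewrite !ltnS ltnW.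
  rewrite cnt_lx hi /m0 /mm /= ifN; last by rewrite ?eqSS neq_ltn ltn_ord.
  by rewrite fnE /= inord_val.
- have hB : count_mem d (drop d (parts lx)) = bb x by rewrite cnt_lx ltnSn /m0 /mm /= eqxx.
  have hA : lam lx k = d + aa x by rewrite lam_lx_lo // rr_k.
  apply: ord_inj; rewrite hB hA /aa /bb.
  move: (ltn_ord x.2.1) (ltn_ord x.2.2); case: pos => /=;
  move: (nat_of_ord x.2.1) (nat_of_ord x.2.2) => s c hs hc; rewrite inordK; lia.
- have hB : count_mem d (drop d (parts lx)) = bb x by rewrite cnt_lx ltnSn /m0 /mm /= eqxx.
  have hA : lam lx k = d + aa x by rewrite lam_lx_lo // rr_k.
  apply: ord_inj; rewrite hB hA /aa /bb.
  move: (ltn_ord x.2.1) (ltn_ord x.2.2); case: pos => /=;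
  move: (nat_of_ord x.2.1) (nat_of_ord x.2.2) => s c hs hc; rewrite inordK; lia.
Qed.

End Dir2.

Lemma card_eq : #|[pred l : partn n | (ncols l == d) && (colpos l k == pos)]| =
  #|[pred x : TT | wt x == n]|.
Proof.
apply: (card_by_bij (f := ff) (g := gg)).
- move=> l /andP [/eqP hc /eqP hp]; split; first by rewrite /= wt_ff.
  exact: gg_ff.
- move=> x /eqP hw; exists (lx hw); split.
  + exact: gg_x.
  + by rewrite /= ncols_lx colpos_lx !eqxx.
  + exact: ff_lx.
Qed.

End Bij.
Local Open Scope ring_scope.

Definition eqm (N : nat) (p q : {poly int}) := forall i, (i < N)%N -> p`_i = q`_i.

Lemma eqm_refl N p : eqm N p p. Proof. by []. Qed.
Lemma eqm_sym N p q : eqm N p q -> eqm N q p. Proof. by move=> h i hi; rewrite h. Qed.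
Lemma eqm_trans N p q r : eqm N p q -> eqm N q r -> eqm N p r.
Proof. by move=> h1 h2 i hi; rewrite h1 ?h2. Qed.
Lemma eqm_mul N p p' q q' : eqm N p p' -> eqm N q q' -> eqm N (p * q) (p' * q').
Proof.
move=> h1 h2 i hi; rewrite !coefM; apply: eq_bigr => j _.
have hj := ltn_ord j.
rewrite h1 ?h2 //; apply: (leq_ltn_trans _ hi); [exact: leq_subr | lia].
Qed.
Lemma eqm_take N p q : eqm N p q -> take_poly N p = take_poly N q.
Proof. by move=> h; apply/polyP => i; rewrite !coef_take_poly; case: ifP => // /h. Qed.

Lemma eqm_prod N (I : finType) (F G : I -> {poly int}) :
  (forall i, eqm N (F i) (G i)) -> eqm N (\prod_i F i) (\prod_i G i).
Proof.
move=> h; apply: (big_ind2 (fun p q => eqm N p q)) => //.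
by move=> ? ? ? ? ; apply: eqm_mul.
Qed.

Lemma eqm_1X N m : (0 < m)%N -> eqm N (1 - 'X^m ^+ N) 1.
Proof.
move=> hm i hi; rewrite coefB -exprM coefXn.
rewrite (_ : (i == m * N)%N = false) ?subr0 //.
apply/negbTE; rewrite neq_ltn; apply/orP; left.
by apply: (leq_trans hi); rewrite leq_pmull.
Qed.

Lemma geo (y : {poly int}) n : (\sum_(j < n) y ^+ j) * (1 - y) = 1 - y ^+ n.
Proof. by rewrite -opprB mulrN mulrC -subrX1 opprB. Qed.

Lemma sum_pair (A B : finType) (F : A -> {poly int}) (G : B -> {poly int}) :
  \sum_(p : A * B) F p.1 * G p.2 = (\sum_a F a) * (\sum_b G b).
Proof. by rewrite -(pair_bigA _ (fun a b => F a * G b)) /= big_distrlr. Qed.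

Section GF.
Variables (k M : nat) (pos : bool).
Local Notation d := k.+1.
Local Notation N := M.+1.

Definition cnt (m : nat) : nat := #|[pred x : TT k M | wt pos x == m]|.
Definition GX : {poly int} := \sum_(x : TT k M) 'X^(wt pos x).

Lemma cnt0 : cnt 0 = 0%N.
Proof.
apply: eq_card0 => x; rewrite !inE /wt; apply/negbTE; rewrite -lt0n.
by rewrite -!addnA addn_gt0 muln_gt0.
Qed.

Lemma gen_cnt : eqm N (gen_trunc cnt N) GX.
Proof.
move=> i hi.
have -> : gen_trunc cnt N = \poly_(m < N) (cnt m)%:R.
  rewrite poly_def -(big_mkord xpredT (fun m => (cnt m)%:R *: 'X^m)) /gen_trunc (big_ltn (ltn0Sn M)) cnt0 scale0r add0r.
  done.
rewrite coef_poly hi /GX coef_sum.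
under eq_bigr do rewrite coefXn.
rewrite -natr_sum; congr (_%:R).
rewrite /cnt -sum1_card big_mkcond /=; apply: eq_bigr => x _.
by rewrite !inE eq_sym; case: eqP.
Qed.

Lemma GX_eq : GX = 'X^(d * d) * (\prod_(i < k) \sum_(j < N) 'X^(i.+1 * j)) ^+ 2 *
  ('X^d ^+ pos * ((\sum_(s < N) ('X^d ^+ 2) ^+ s) * (\sum_(c < N) 'X^d ^+ c))).
Proof.
have e : forall x : TT k M, 'X^(wt pos x) = (
   ('X^(d * d) * ((\prod_(i < k) 'X^(i.+1 * x.1.1 i)) * (\prod_(i < k) 'X^(i.+1 * x.1.2 i)))) *
   ('X^d ^+ pos * (('X^d ^+ 2) ^+ x.2.1 * 'X^d ^+ x.2.2)) : {poly int}).
  move=> x; rewrite !prodrXr -!exprM -!exprD; congr ('X^ _).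
  rewrite /wt /aa /bb; case: pos => /=; ring.
rewrite /GX (eq_bigr _ (fun x _ => e x)).
rewrite (sum_pair (fun y : {ffun 'I_k -> 'I_N} * {ffun 'I_k -> 'I_N} =>
   'X^(d * d) * ((\prod_(i < k) 'X^(i.+1 * y.1 i)) * (\prod_(i < k) 'X^(i.+1 * y.2 i))))
  (fun z : 'I_N * 'I_N => 'X^d ^+ pos * (('X^d ^+ 2) ^+ z.1 * 'X^d ^+ z.2))).
rewrite -mulr_sumr -mulr_sumr.
rewrite (sum_pair (fun y : {ffun 'I_k -> 'I_N} => \prod_(i < k) 'X^(i.+1 * y i))
   (fun y : {ffun 'I_k -> 'I_N} => \prod_(i < k) 'X^(i.+1 * y i))).
rewrite (sum_pair (fun s : 'I_N => ('X^d ^+ 2) ^+ s) (fun c : 'I_N => 'X^d ^+ c)).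
rewrite -(bigA_distr_bigA (fun (i : 'I_k) (j : 'I_N) => 'X^(i.+1 * j))).
by rewrite expr2 mulrA.
Qed.

Lemma main_id : eqm N (GX * qpoch d ^+ 2 * (1 + 'X^d)) 'X^(d * d + d * pos).
Proof.
rewrite GX_eq /qpoch [\prod_(i < d) _]big_ord_recr /=.
set Q := \prod_(i < k) (1 - _); set A := \prod_(i < k) \sum_(j < N) _.
set S2 := \sum_(s < N) _; set S1 := \sum_(c < N) _.
have hAQ : A * Q = \prod_(i < k) (1 - 'X^(i.+1) ^+ N).
  rewrite /A /Q -big_split /=; apply: eq_bigr => i _.
  under eq_bigr do rewrite exprM.
  exact: geo.
have h2 : S2 * (1 - 'X^d ^+ 2) = 1 - ('X^d ^+ 2) ^+ N by exact: geo.
have h1 : S1 * (1 - 'X^d) = 1 - 'X^d ^+ N by exact: geo.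
have -> : 'X^(d * d) * A ^+ 2 * ('X^d ^+ pos * (S2 * S1)) * (Q * (1 - 'X^d)) ^+ 2 * (1 + 'X^d)
   = 'X^(d * d) * 'X^d ^+ pos * ((A * Q) * (A * Q)) * (S2 * (1 - 'X^d ^+ 2)) * (S1 * (1 - 'X^d)).
  ring.
rewrite hAQ h2 h1.
apply: (@eqm_trans _ _ ('X^(d * d) * 'X^d ^+ pos * (1 * 1) * 1 * 1)); last first.
  by rewrite !mulr1 -exprM -exprD.
have hP : eqm N (\prod_(i < k) (1 - 'X^(i.+1) ^+ N)) 1.
  apply: (@eqm_trans _ _ (\prod_(i < k) 1)); last by rewrite big1_eq.
  by apply: eqm_prod => i; exact: (@eqm_1X N i.+1 (ltn0Sn _)).
repeat apply: eqm_mul; try exact: eqm_refl; try exact: hP.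
- have -> : ('X^d ^+ 2 : {poly int}) = 'X^(d * 2) by rewrite exprM.
  exact: (@eqm_1X N (d * 2) (ltn0Sn _)).
- exact: (@eqm_1X N d (ltn0Sn _)).
Qed.

End GF.
Local Close Scope ring_scope.

Section LB.
Variables (n k : nat) (l : partn n).
Hypothesis hc : ncols l = k.+1.

Lemma lb_k : k \in last_block l.
Proof.
rewrite /last_block mem_filter hc mem_iota /= ltnSn andbT subSnn /= eqxx //.
Qed.

Lemma lb_all j : j \in last_block l -> colpos l j = colpos l k.
Proof.
rewrite /last_block mem_filter hc mem_iota /= => /andP [/allP h hj].
have hm : j \in iota j (k.+1 - j) by rewrite mem_iota leqnn /=; lia.
by move: (h j hm) => /eqP.
Qed.

Lemma lb_posE : last_block_pos l = colpos l k.
Proof.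
rewrite /last_block_pos; have hk := lb_k.
have -> : (last_block l != [::]) = true by case: (last_block l) hk.
case hp: (colpos l k) => /=.
- by apply/allP => j /lb_all ->.
- by apply/negbTE/allPn; exists k => //; rewrite hp.
Qed.

Lemma lb_negE : last_block_neg l = ~~ colpos l k.
Proof.
rewrite /last_block_neg; have hk := lb_k.
have -> : (last_block l != [::]) = true by case: (last_block l) hk.
have cn : forall j, colneg l j = ~~ colpos l j by move=> j; rewrite /colneg /colpos -leqNgt.
case hp: (colpos l k) => /=.
- by apply/negbTE/allPn; exists k => //; rewrite cn hp.
- by apply/allP => j /lb_all; rewrite cn => ->; rewrite hp.
Qed.
End LB.

Lemma apos_cnt k M n : (n <= M)%N -> apos n k.+1 = cnt k M true n.
Proof.
move=> h; rewrite /apos /cnt -(card_eq k true h); apply: eq_card => l; rewrite !inE.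
by case: eqP => //= hc; rewrite (lb_posE hc) eqb_id.
Qed.

Lemma aneg_cnt k M n : (n <= M)%N -> aneg n k.+1 = cnt k M false n.
Proof.
move=> h; rewrite /aneg /cnt -(card_eq k false h); apply: eq_card => l; rewrite !inE.
by case: eqP => //= hc; rewrite (lb_negE hc) eqbF_neg.
Qed.

Local Open Scope ring_scope.

Theorem theorem1p4 (d : nat) : (1 <= d)%N ->
  (forall N : nat,
     take_poly N (gen_trunc (fun n => apos n d) N * qpoch d ^+ 2 * (1 + 'X^d))
     = take_poly N 'X^(d * d + d)) /\
  (forall N : nat,
     take_poly N (gen_trunc (fun n => aneg n d) N * qpoch d ^+ 2 * (1 + 'X^d))
     = take_poly N 'X^(d * d)).
Proof.
case: d => [//|k] _; split => -[|M]; rewrite ?take_poly0l //; apply: eqm_take.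
- have -> : gen_trunc (fun n => apos n k.+1) M.+1 = gen_trunc (cnt k M true) M.+1.
    apply: eq_big_nat => m /andP [_ hm]; rewrite (@apos_cnt k M m) //.
  refine (@eqm_trans _ _ (GX k M true * qpoch k.+1 ^+ 2 * (1 + 'X^(k.+1))) _ _ _).
    by apply: eqm_mul; [apply: eqm_mul; [exact: gen_cnt | exact: eqm_refl] | exact: eqm_refl].
  by have := @main_id k M true; rewrite muln1.
- have -> : gen_trunc (fun n => aneg n k.+1) M.+1 = gen_trunc (cnt k M false) M.+1.
    apply: eq_big_nat => m /andP [_ hm]; rewrite (@aneg_cnt k M m) //.
  refine (@eqm_trans _ _ (GX k M false * qpoch k.+1 ^+ 2 * (1 + 'X^(k.+1))) _ _ _).
    by apply: eqm_mul; [apply: eqm_mul; [exact: gen_cnt | exact: eqm_refl] | exact: eqm_refl].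
  by have := @main_id k M false; rewrite muln0 addn0.
Qed.
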